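(* There is a universal constant $c\ge 1$ such that the following holds. Let $f\in C^\infty(\{s>0\})$ be a nonnegative solution of $s^3f_{ss}+f_{tt}=0$ on the half-plane $\{(s,t): s>0\}$. Then for every $s_0>0$, every $t_0\in\mathbb{R}$ and every $M\in\mathbb{R}\setminus\{t_0\}$, $$f(s_0,t)\;\ge\;\frac{f(s_0,t_0)}{\big(2+s_0(t_0-M)^2\big)^{c}}\cdot\frac{(t-M)^2}{(t_0-M)^2}$$ for all $t$ in the closed interval between $M$ and $t_0$.
   Context: Coordinates $(s,t)$ range over $\{s>0\}\times\mathbb{R}$. (This equation arises from $f_{xx}+f_{yy}+3x^{-1}f_x=0$ on $\{x>0\}$ under the change of variables $s=\tfrac{1}{2x^2}$, $t=\sqrt8\,y$.) *)

(* Defs.v *)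
From Stdlib Require Export Reals.
Open Scope R_scope.

Definition half_plane (s t : R) : Prop := 0 < s.

(* Joint continuity of g : R -> R -> R at (s,t) (Euclidean topology on R^2,
   expressed with the max-norm, which induces the same topology). *)
Definition continuous2_at (g : R -> R -> R) (s t : R) : Prop :=
  forall eps, 0 < eps -> exists delta, 0 < delta /\
    forall s' t', Rabs (s' - s) < delta -> Rabs (t' - t) < delta ->
      Rabs (g s' t' - g s t) < eps.

(* D i j is then the mixed partial derivative d_s^i d_t^j f. *)
Definition smooth_on_half_plane (f : R -> R -> R) (D : nat -> nat -> R -> R -> R) : Prop :=
  (forall s t, half_plane s t -> D 0%nat 0%nat s t = f s t) /\
  (forall i j s t, half_plane s t ->
     derivable_pt_lim (fun s' => D i j s' t) s (D (S i) j s t) /\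
     derivable_pt_lim (fun t' => D i j s t') t (D i (S j) s t) /\
     continuous2_at (D i j) s t).

(* Main.v *)
Require Import Defs.
From Stdlib Require Import Reals Lra Lia Psatz List Classical ClassicalEpsilon.
Open Scope R_scope.


Lemma list_min_pos (dl : R -> R) (l : list R) :
  (forall x, In x l -> 0 < dl x) ->
  exists m, 0 < m /\ forall x, In x l -> m <= dl x.
Proof.
  induction l as [|x0 l IH]; intros H.
  - exists 1; split; [lra| intros x []].
  - destruct IH as [m [Hm Hm2]].
    + intros x Hx; apply H; right; exact Hx.
    + exists (Rmin m (dl x0)); split.
      * apply Rmin_glb_lt; [lra| apply H; left; reflexivity].
      * intros x [<-|Hx]; [apply Rmin_r|].
        apply Rle_trans with m; [apply Rmin_l| apply Hm2; exact Hx].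
Qed.

Lemma unif_t (G : R -> R -> R) (s c d : R) :
  (forall t, c <= t <= d -> continuous2_at G s t) ->
  forall eps, 0 < eps -> exists del, 0 < del /\
    forall s' y, Rabs (s'-s) < del -> c <= y <= d -> Rabs (G s' y - G s y) < eps.
Proof.
  intros HG eps Heps.
  assert (H : forall t, exists dl, 0 < dl /\ (c <= t <= d -> forall s' t',
     Rabs (s'-s) < dl -> Rabs (t'-t) < dl -> Rabs (G s' t' - G s t) < eps/2)).
  { intro t. destruct (classic (c <= t <= d)) as [Ht|Ht].
    - destruct (HG t Ht (eps/2)) as [dl [H1 H2]]; [lra|].
      exists dl; split; auto.
    - exists 1; split; [lra| intros; contradiction]. }
  set (dl := fun t => proj1_sig (constructive_indefinite_description _ (H t))).
  assert (Hdl : forall t, 0 < dl t /\ (c <= t <= d -> forall s' t',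
     Rabs (s'-s) < dl t -> Rabs (t'-t) < dl t -> Rabs (G s' t' - G s t) < eps/2)).
  { intro t. unfold dl. destruct (constructive_indefinite_description _ (H t)); simpl; auto. }
  assert (Hcond : forall x, (exists y, (c <= x <= d /\ Rabs (y - x) < dl x)) -> c <= x <= d).
  { intros x [y [Hy _]]; exact Hy. }
  set (F := mkfamily (fun t => c <= t <= d) (fun t y => c <= t <= d /\ Rabs (y - t) < dl t) Hcond).
  assert (Hcov : covering_open_set (fun t => c <= t <= d) F).
  { split.
    - intros x Hx. exists x. simpl. split; auto. rewrite Rminus_diag, Rabs_R0. apply Hdl.
    - intros x. simpl. destruct (classic (c <= x <= d)) as [Hx|Hx].
      + apply open_set_P6 with (disc x (mkposreal _ (proj1 (Hdl x)))).
        * apply disc_P1.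
        * split; intros y Hy; unfold disc in *; simpl in *.
          -- split; auto.
          -- apply Hy.
      + apply open_set_P6 with (fun _ => False).
        * apply open_set_P4.
        * split; intros y Hy; [contradiction| destruct Hy; contradiction]. }
  destruct (compact_P3 c d F Hcov) as [Dd [Hcv [l Hl]]].
  destruct (list_min_pos dl l) as [m [Hm Hm2]].
  { intros x _; apply Hdl. }
  exists m; split; auto.
  intros s' y Hs' Hy.
  destruct (Hcv y Hy) as [t [[Ht1 Ht2] Ht3]].
  assert (Hin : In t l) by (apply Hl; split; [exact Ht1| exact Ht3]).
  assert (Hmt := Hm2 t Hin).
  assert (A1 : Rabs (G s' y - G s t) < eps/2).
  { apply (proj2 (Hdl t)); auto; lra. }
  assert (A2 : Rabs (G s y - G s t) < eps/2).
  { apply (proj2 (Hdl t)); auto. rewrite Rminus_diag, Rabs_R0; apply Hdl. }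
  replace (G s' y - G s y) with ((G s' y - G s t) - (G s y - G s t)) by ring.
  eapply Rle_lt_trans; [apply Rabs_triang|]. rewrite Rabs_Ropp. lra.
Qed.

Lemma evt2 (G : R -> R -> R) (a b c d : R) :
  0 < a -> a <= b -> c <= d ->
  (forall s t, 0 < s -> continuous2_at G s t) ->
  exists sm tm, a <= sm <= b /\ c <= tm <= d /\
    forall s t, a <= s <= b -> c <= t <= d -> G s t <= G s t /\ G s t <= G sm tm.
Proof.
  intros Ha Hab Hcd HG.
  assert (Hex : forall s, exists tm, c <= tm <= d /\ (0 < s -> forall t, c <= t <= d -> G s t <= G s tm)).
  { intro s. destruct (classic (0 < s)) as [Hs|Hs].
    - destruct (continuity_ab_maj (G s) c d Hcd) as [Mx [H1 H2]].
      + intros t Ht. intros eps Heps. destruct (HG s t Hs eps Heps) as [dl [Hdl Hdl2]].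
        exists dl; split; auto. intros x [_ Hx]. unfold R_dist in *. simpl in *.
        apply Hdl2; auto. rewrite Rminus_diag, Rabs_R0; auto.
      + exists Mx; split; auto.
    - exists c; split; [lra| intros; contradiction]. }
  set (tmf := fun s => proj1_sig (constructive_indefinite_description _ (Hex s))).
  assert (Htm : forall s, c <= tmf s <= d /\ (0 < s -> forall t, c <= t <= d -> G s t <= G s (tmf s))).
  { intro s; unfold tmf; destruct (constructive_indefinite_description _ (Hex s)); simpl; auto. }
  set (h := fun s => G s (tmf s)).
  assert (Hh : forall s, a <= s <= b -> continuity_pt h s).
  { intros s Hs eps Heps.
    destruct (unif_t G s c d (fun t _ => HG s t ltac:(lra)) (eps/2)) as [del [Hdel Hdel2]]; [lra|].
    exists (Rmin del (a/2)); split.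
    { apply Rmin_glb_lt; lra. }
    intros x [_ Hx]. unfold R_dist in *; simpl in *.
    assert (Hxd : Rabs (x - s) < del) by (eapply Rlt_le_trans; [exact Hx| apply Rmin_l]).
    assert (Hxa : Rabs (x - s) < a/2) by (eapply Rlt_le_trans; [exact Hx| apply Rmin_r]).
    assert (Hx0 : 0 < x) by (apply Rabs_def2 in Hxa; lra).
    unfold h.
    destruct (Htm x) as [Htx1 Htx2]. destruct (Htm s) as [Hts1 Hts2].
    assert (B1 := Hdel2 x (tmf x) Hxd Htx1).
    assert (B2 := Hdel2 x (tmf s) Hxd Hts1).
    assert (C1 := Htx2 Hx0 (tmf s) Hts1).
    assert (C2 := Hts2 ltac:(lra) (tmf x) Htx1).
    apply Rabs_def2 in B1. apply Rabs_def2 in B2.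
    apply Rabs_def1; lra. }
  destruct (continuity_ab_maj h a b Hab Hh) as [sm [Hsm1 Hsm2]].
  exists sm, (tmf sm). split; auto. split; [apply Htm|].
  intros s t Hs Ht. split; [lra|].
  apply Rle_trans with (h s).
  - apply (proj2 (Htm s)); auto; lra.
  - apply Hsm1; auto.
Qed.


Lemma max_deriv0 (g : R -> R) x l del :
  0 < del -> (forall y, Rabs (y - x) < del -> g y <= g x) ->
  derivable_pt_lim g x l -> l = 0.
Proof.
  intros Hdel Hmax Hd.
  destruct (Rtotal_order l 0) as [Hl|[Hl|Hl]]; auto; exfalso.
  - destruct (Hd (-l) ltac:(lra)) as [dl Hdl].
    set (h := - Rmin (dl/2) (del/2)).
    assert (Hh1 : Rmin (dl/2) (del/2) > 0) by (apply Rmin_glb_lt; destruct dl; simpl; lra).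
    assert (Hh2 : Rmin (dl/2) (del/2) <= dl/2) by apply Rmin_l.
    assert (Hh3 : Rmin (dl/2) (del/2) <= del/2) by apply Rmin_r.
    assert (A := Hdl h ltac:(intro; unfold h in *; lra) ltac:(unfold h; rewrite Rabs_Ropp, Rabs_pos_eq; destruct dl; simpl in *; lra)).
    assert (B := Hmax (x + h) ltac:(unfold h; replace (x + _ - x) with (- Rmin (dl/2) (del/2)) by ring; rewrite Rabs_Ropp, Rabs_pos_eq; lra)).
    apply Rabs_def2 in A. destruct A as [A1 A2].
    assert (C : (g (x + h) - g x) / h < 0) by lra.
    assert (D : (g (x + h) - g x) / h = (g x - g (x+h)) / (-h)) by (field; unfold h; lra).
    rewrite D in C. unfold Rdiv in C.
    assert (E : 0 <= (g x - g (x+h)) * / - h) by (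
      (apply Rmult_le_pos; [lra| left; apply Rinv_0_lt_compat; unfold h; lra])).
    lra.
  - destruct (Hd l ltac:(lra)) as [dl Hdl].
    set (h := Rmin (dl/2) (del/2)).
    assert (Hh1 : h > 0) by (apply Rmin_glb_lt; destruct dl; simpl; lra).
    assert (Hh2 : h <= dl/2) by apply Rmin_l.
    assert (Hh3 : h <= del/2) by apply Rmin_r.
    assert (A := Hdl h ltac:(lra) ltac:(rewrite Rabs_pos_eq; destruct dl; simpl in *; lra)).
    assert (B := Hmax (x + h) ltac:(replace (x + h - x) with h by ring; rewrite Rabs_pos_eq; lra)).
    apply Rabs_def2 in A. destruct A as [A1 A2].
    assert (C : (g (x + h) - g x) / h > 0) by lra.
    assert (E : (g (x + h) - g x) / h <= 0).
    { unfold Rdiv. idtac;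
      (rewrite <- (Rmult_0_l (/h)); apply Rmult_le_compat_r; [left; apply Rinv_0_lt_compat; lra| lra]). }
    lra.
Qed.

Lemma max_deriv2 (g g1 : R -> R) x g2 del :
  0 < del -> (forall y, Rabs (y - x) < del -> g y <= g x) ->
  (forall y, Rabs (y - x) < del -> derivable_pt_lim g y (g1 y)) ->
  derivable_pt_lim g1 x g2 -> g1 x = 0 /\ g2 <= 0.
Proof.
  intros Hdel Hmax Hd Hd2.
  assert (H0 : g1 x = 0).
  { apply (max_deriv0 g x _ del Hdel Hmax). apply Hd. rewrite Rminus_diag, Rabs_R0; lra. }
  split; auto.
  destruct (Rle_or_lt g2 0) as [Hl|Hl]; auto; exfalso.
  destruct (Hd2 g2 Hl) as [dl Hdl].
  set (h := Rmin (dl/2) (del/2)).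
  assert (Hh1 : h > 0) by (apply Rmin_glb_lt; destruct dl; simpl; lra).
  assert (Hh2 : h <= dl/2) by apply Rmin_l.
  assert (Hh3 : h <= del/2) by apply Rmin_r.
  destruct (MVT_cor2 g g1 x (x + h)) as [c [Hc1 Hc2]].
  - lra.
  - intros c Hc. apply Hd. rewrite Rabs_pos_eq; lra.
  - assert (A := Hdl (c - x) ltac:(lra) ltac:(rewrite Rabs_pos_eq; destruct dl; simpl in *; lra)).
    replace (x + (c - x)) with c in A by ring. rewrite H0 in A.
    apply Rabs_def2 in A. destruct A as [A1 A2].
    assert (C : 0 < (g1 c - 0) / (c - x)) by lra.
    assert (C2 : 0 < g1 c).
    { unfold Rdiv in C. rewrite Rminus_0_r in C.
      destruct (Rle_or_lt (g1 c) 0) as [Hn|Hn]; auto.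
      assert (0 <= - g1 c * / (c - x)) by (apply Rmult_le_pos; [lra| left; apply Rinv_0_lt_compat; lra]).
      lra. }
    assert (B := Hmax (x + h) ltac:(replace (x + h - x) with h by ring; rewrite Rabs_pos_eq; lra)).
    assert (0 < g1 c * (x + h - x)) by (apply Rmult_lt_0_compat; lra).
    lra.
Qed.


Lemma alg_core (s a b as_ at_ bt ass ast att btt p ps pt pss ptt : R) :
  0 < s -> 0 < p ->
  0 < s^3*a^2 + b^2 ->
  s^3*(as_ + a^2) + bt + b^2 = 0 ->
  3*s^2*(as_ + a^2) + s^3*(ass + 2*a*as_) + att + 2*b*at_ = 0 ->
  s^3*(ast + 2*a*at_) + btt + 2*b*bt = 0 ->
  let Q := s^3*a^2 + b^2 in
  let Qs := 3*s^2*a^2 + 2*s^3*a*as_ + 2*b*at_ in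
  let Qt := 2*s^3*a*at_ + 2*b*bt in
  let Qss := 6*s*a^2 + 12*s^2*a*as_ + 2*s^3*(as_^2 + a*ass) + 2*(at_^2 + b*ast) in
  let Qtt := 2*s^3*(at_^2 + a*att) + 2*(bt^2 + b*btt) in
  ps*Q + p*Qs = 0 ->
  pt*Q + p*Qt = 0 ->
  pss*Q + 2*ps*Qs + p*Qss <= 0 ->
  ptt*Q + 2*pt*Qt + p*Qtt <= 0 ->
  (1/5)*p^2*Q <= 7*(s^3*ps^2 + pt^2) - p*(s^3*pss + ptt).
Proof.
  intros Hs Hp HQ E0 E1 E2 Q Qs Qt Qss Qtt M1 M2 M3 M4.
  set (G2 := 3*s^4*a^2 + 3*s^5*a*as_ + s^6*as_^2 + 2*s^3*at_^2 + bt^2).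
  set (ls := 3*s^2*as_ + s^3*ass + att).
  set (lt := s^3*ast + btt).
  assert (Id : s^3*Qss + Qtt = 2*G2 + 2*(s^3*a*ls + b*lt)).
  { unfold Qss, Qtt, G2, ls, lt. ring. }
  assert (Els : ls = - Qs) by (unfold ls, Qs; lra).
  assert (Elt : lt = - Qt) by (unfold lt, Qt; lra).
  assert (El : s^3*as_ + bt = - Q) by (unfold Q; lra).
  assert (HG2 : G2 >= Q^2/5).
  { replace (Q^2) with ((s^3*as_+bt)^2) by (rewrite El; ring). unfold G2.
    assert (0 <= s^3) by (apply pow_le; lra).
    assert (0 <= s^3*at_^2) by (apply Rmult_le_pos; [lra| apply pow2_ge_0]).
    assert (0 <= (s^2*a + s^3*as_/2)^2) by apply pow2_ge_0.
    assert (0 <= (s^3*as_ - 4*bt)^2) by apply pow2_ge_0.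
    assert (E : 3*s^4*a^2 + 3*s^5*a*as_ + s^6*as_^2 + 2*s^3*at_^2 + bt^2 - (s^3*as_+bt)^2/5
       = 3*(s^2*a + s^3*as_/2)^2 + (s^3*as_ - 4*bt)^2/20 + 2*(s^3*at_^2)) by field.
    lra. }
  assert (T : s^3*(pss*Q + 2*ps*Qs + p*Qss) + (ptt*Q + 2*pt*Qt + p*Qtt) <= 0).
  { assert (0 <= s^3) by (apply pow_le; lra). nra. }
  assert (T2 : Q*p*(s^3*pss + ptt) - 2*Q*(s^3*ps^2 + pt^2) + 2*p^2*G2
               + 2*p*Q*(s^3*a*ps + b*pt) <= 0).
  { assert (Hx : p*(s^3*(pss*Q + 2*ps*Qs + p*Qss) + (ptt*Q + 2*pt*Qt + p*Qtt)) <= 0).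
    { apply Rmult_le_0_l ||
      (rewrite <- (Rmult_0_r p); apply Rmult_le_compat_l; lra). }
    replace (p*(s^3*(pss*Q + 2*ps*Qs + p*Qss) + (ptt*Q + 2*pt*Qt + p*Qtt)))
      with (Q*p*(s^3*pss + ptt) + 2*(s^3*ps*(p*Qs) + pt*(p*Qt)) + p^2*(s^3*Qss + Qtt)) in Hx by ring.
    rewrite Id, Els, Elt in Hx.
    replace (p*Qs) with (-(ps*Q)) in Hx by lra.
    replace (p*Qt) with (-(pt*Q)) in Hx by lra.
    replace (p ^ 2 * (2 * G2 + 2 * (s ^ 3 * a * - Qs + b * - Qt)))
      with (2*p^2*G2 - 2*p*(s^3*a*(p*Qs) + b*(p*Qt))) in Hx by ring.
    replace (p*Qs) with (-(ps*Q)) in Hx by lra.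
    replace (p*Qt) with (-(pt*Q)) in Hx by lra.
    lra. }
  assert (T3 : p*(s^3*pss + ptt) - 2*(s^3*ps^2 + pt^2) + (2/5)*p^2*Q
               + 2*p*(s^3*a*ps + b*pt) <= 0).
  { assert (HQ' : 0 < Q) by exact HQ.
    assert (X : Q * (p*(s^3*pss + ptt) - 2*(s^3*ps^2 + pt^2) + (2/5)*p^2*Q
               + 2*p*(s^3*a*ps + b*pt)) <= 0).
    { assert (2*p^2*G2 >= 2*p^2*(Q^2/5)) by (apply Rle_ge; apply Rmult_le_compat_l; [nra| lra]).
      nra. }
    destruct (Rle_or_lt (p*(s^3*pss + ptt) - 2*(s^3*ps^2 + pt^2) + (2/5)*p^2*Q
               + 2*p*(s^3*a*ps + b*pt)) 0) as [Y|Y]; auto. nra. }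
  assert (CS : (s^3*a*ps + b*pt)^2 <= Q*(s^3*ps^2 + pt^2)).
  { unfold Q. assert (0 <= s^3) by (apply pow_le; lra).
    assert (0 <= s^3*(a*pt - b*ps)^2) by (apply Rmult_le_pos; [lra| apply pow2_ge_0]).
    assert (E : (s^3*a^2 + b^2)*(s^3*ps^2 + pt^2) - (s^3*a*ps + b*pt)^2 = s^3*(a*pt - b*ps)^2) by ring.
    lra. }
  assert (AM : 2*p*Rabs (s^3*a*ps + b*pt) <= (1/5)*p^2*Q + 5*(s^3*ps^2 + pt^2)).
  { set (g := Rabs (s^3*a*ps + b*pt)).
    assert (g^2 <= Q*(s^3*ps^2 + pt^2)) by (unfold g; rewrite <- Rsqr_pow2, <- Rsqr_abs, Rsqr_pow2; exact CS).
    assert (0 <= (p*Q - 5*g)^2) by apply pow2_ge_0.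
    assert (HQ' : 0 < Q) by exact HQ.
    assert (X : Q * (2*p*g) <= Q * ((1/5)*p^2*Q + 5*(s^3*ps^2 + pt^2))) by nra.
    apply Rmult_le_reg_l with Q; auto. }
  assert (R1 : - (2*p*Rabs (s^3*a*ps + b*pt)) <= 2*p*(s^3*a*ps + b*pt)).
  { assert (- Rabs (s^3*a*ps + b*pt) <= (s^3*a*ps + b*pt)) by (pose proof (Rle_abs (-(s^3*a*ps + b*pt))); rewrite Rabs_Ropp in *; lra).
    nra. }
  lra.
Qed.


Lemma cont2_const c s t : continuous2_at (fun _ _ => c) s t.
Proof. intros e He; exists 1; split; [lra|]; intros; rewrite Rminus_diag, Rabs_R0; auto. Qed.

Lemma cont2_s s t : continuous2_at (fun x _ => x) s t.
Proof. intros e He; exists e; split; auto. Qed.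

Lemma cont2_t s t : continuous2_at (fun _ y => y) s t.
Proof. intros e He; exists e; split; auto. Qed.

Lemma cont2_plus f g s t : continuous2_at f s t -> continuous2_at g s t ->
  continuous2_at (fun x y => f x y + g x y) s t.
Proof.
  intros Hf Hg e He.
  destruct (Hf (e/2) ltac:(lra)) as [d1 [Hd1 H1]].
  destruct (Hg (e/2) ltac:(lra)) as [d2 [Hd2 H2]].
  exists (Rmin d1 d2); split; [apply Rmin_glb_lt; auto|].
  intros s' t' Hs Ht.
  assert (A := H1 s' t' ltac:(eapply Rlt_le_trans; [exact Hs| apply Rmin_l]) ltac:(eapply Rlt_le_trans; [exact Ht| apply Rmin_l])).
  assert (B := H2 s' t' ltac:(eapply Rlt_le_trans; [exact Hs| apply Rmin_r]) ltac:(eapply Rlt_le_trans; [exact Ht| apply Rmin_r])).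
  replace (f s' t' + g s' t' - (f s t + g s t)) with ((f s' t' - f s t) + (g s' t' - g s t)) by ring.
  eapply Rle_lt_trans; [apply Rabs_triang| lra].
Qed.

Lemma cont2_mult f g s t : continuous2_at f s t -> continuous2_at g s t ->
  continuous2_at (fun x y => f x y * g x y) s t.
Proof.
  intros Hf Hg e He.
  set (A := Rabs (f s t) + 1). set (B := Rabs (g s t) + 1).
  assert (HA : 0 < A) by (unfold A; pose proof (Rabs_pos (f s t)); lra).
  assert (HB : 0 < B) by (unfold B; pose proof (Rabs_pos (g s t)); lra).
  destruct (Hf (Rmin 1 (e/(2*B))) ltac:(apply Rmin_glb_lt; [lra| apply Rdiv_lt_0_compat; lra])) as [d1 [Hd1 H1]].
  destruct (Hg (e/(2*(A+1))) ltac:(apply Rdiv_lt_0_compat; lra)) as [d2 [Hd2 H2]].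
  exists (Rmin d1 d2); split; [apply Rmin_glb_lt; auto|].
  intros s' t' Hs Ht.
  assert (X := H1 s' t' ltac:(eapply Rlt_le_trans; [exact Hs| apply Rmin_l]) ltac:(eapply Rlt_le_trans; [exact Ht| apply Rmin_l])).
  assert (Y := H2 s' t' ltac:(eapply Rlt_le_trans; [exact Hs| apply Rmin_r]) ltac:(eapply Rlt_le_trans; [exact Ht| apply Rmin_r])).
  assert (X1 : Rabs (f s' t' - f s t) < 1) by (eapply Rlt_le_trans; [exact X| apply Rmin_l]).
  assert (X2 : Rabs (f s' t' - f s t) < e/(2*B)) by (eapply Rlt_le_trans; [exact X| apply Rmin_r]).
  assert (Hfs : Rabs (f s' t') <= A + 1).
  { replace (f s' t') with ((f s' t' - f s t) + f s t) by ring.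
    eapply Rle_trans; [apply Rabs_triang| unfold A; lra]. }
  replace (f s' t' * g s' t' - f s t * g s t) with
    (f s' t' * (g s' t' - g s t) + (f s' t' - f s t) * g s t) by ring.
  eapply Rle_lt_trans; [apply Rabs_triang|]. rewrite !Rabs_mult.
  assert (P1 : Rabs (f s' t') * Rabs (g s' t' - g s t) < (A+1) * (e/(2*(A+1)))).
  { apply Rle_lt_trans with ((A+1) * Rabs (g s' t' - g s t));
    [apply Rmult_le_compat_r; [apply Rabs_pos| lra] | apply Rmult_lt_compat_l; lra]. }
  assert (P2 : Rabs (f s' t' - f s t) * Rabs (g s t) <= (e/(2*B)) * B).
  { apply Rmult_le_compat; try apply Rabs_pos; unfold B in *; lra. }
  replace ((A+1) * (e/(2*(A+1)))) with (e/2) in * by (field; lra).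
  replace ((e/(2*B)) * B) with (e/2) in * by (field; lra).
  lra.
Qed.

Lemma cont2_inv f s t : continuous2_at f s t -> f s t <> 0 ->
  continuous2_at (fun x y => / f x y) s t.
Proof.
  intros Hf Hn e He.
  set (m := Rabs (f s t)).
  assert (Hm : 0 < m) by (apply Rabs_pos_lt; auto).
  destruct (Hf (Rmin (m/2) (e*m*m/2)) ltac:(apply Rmin_glb_lt; [lra| apply Rdiv_lt_0_compat; [apply Rmult_lt_0_compat; [apply Rmult_lt_0_compat|]|]; lra])) as [d [Hd H]].
  exists d; split; auto.
  intros s' t' Hs Ht.
  assert (X := H s' t' Hs Ht).
  assert (X1 : Rabs (f s' t' - f s t) < m/2) by (eapply Rlt_le_trans; [exact X| apply Rmin_l]).
  assert (X2 : Rabs (f s' t' - f s t) < e*m*m/2) by (eapply Rlt_le_trans; [exact X| apply Rmin_r]).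
  assert (Hf' : m/2 < Rabs (f s' t')).
  { pose proof (Rabs_triang_inv (f s t) (f s t - f s' t')).
    replace (f s t - (f s t - f s' t')) with (f s' t') in H0 by ring.
    rewrite <- Rabs_Ropp in X1. replace (- (f s' t' - f s t)) with (f s t - f s' t') in X1 by ring.
    unfold m in *; lra. }
  assert (Hn' : f s' t' <> 0) by (intro Z; rewrite Z, Rabs_R0 in Hf'; lra).
  replace (/ f s' t' - / f s t) with ((f s t - f s' t') / (f s' t' * f s t)) by (field; auto).
  unfold Rdiv. rewrite Rabs_mult, Rabs_inv, Rabs_mult.
  rewrite <- Rabs_Ropp. replace (- (f s t - f s' t')) with (f s' t' - f s t) by ring.
  fold m.
  apply Rlt_le_trans with ((e*m*m/2) * / (m/2 * m)).
  - apply Rmult_le_lt_compat ||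
    (apply Rle_lt_trans with (Rabs (f s' t' - f s t) * / (m/2*m)); [
      apply Rmult_le_compat_l; [apply Rabs_pos| apply Rinv_le_contravar; [apply Rmult_lt_0_compat; lra| apply Rmult_le_compat_r; lra]]
    | apply Rmult_lt_compat_r; [apply Rinv_0_lt_compat, Rmult_lt_0_compat; lra| exact X2]]).
  - right; field; lra.
Qed.

Lemma cont2_opp f s t : continuous2_at f s t -> continuous2_at (fun x y => - f x y) s t.
Proof.
  intros H. apply (cont2_mult (fun _ _ => -1) f s t (cont2_const _ _ _)) in H.
  intros e He. destruct (H e He) as [d [Hd H2]]. exists d; split; auto.
  intros. replace (- f s' t' - - f s t) with (-1 * f s' t' - -1 * f s t) by ring. auto.
Qed.

Lemma cont2_minus f g s t : continuous2_at f s t -> continuous2_at g s t ->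
  continuous2_at (fun x y => f x y - g x y) s t.
Proof. intros. unfold Rminus. apply cont2_plus; auto. apply cont2_opp; auto. Qed.

Lemma cont2_div f g s t : continuous2_at f s t -> continuous2_at g s t -> g s t <> 0 ->
  continuous2_at (fun x y => f x y / g x y) s t.
Proof. intros. unfold Rdiv. apply cont2_mult; auto. apply cont2_inv; auto. Qed.

Lemma cont2_pow f n s t : continuous2_at f s t -> continuous2_at (fun x y => f x y ^ n) s t.
Proof.
  intros H. induction n as [|n IH]; simpl.
  - apply cont2_const.
  - apply cont2_mult; auto.
Qed.

From Coquelicot Require Import Coquelicot.
Open Scope R_scope.

Section S.
Variable D : nat -> nat -> R -> R -> R.
Variables sg tau : R.

Definition qa s t := D 1 0 s t / D 0 0 s t.
Definition qb s t := D 0 1 s t / D 0 0 s t.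
Definition qas s t := D 2 0 s t / D 0 0 s t - qa s t ^ 2.
Definition qat s t := D 1 1 s t / D 0 0 s t - qa s t * qb s t.
Definition qbt s t := D 0 2 s t / D 0 0 s t - qb s t ^ 2.
Definition qass s t := D 3 0 s t / D 0 0 s t - D 2 0 s t / D 0 0 s t * qa s t - 2 * qa s t * qas s t.
Definition qast s t := D 2 1 s t / D 0 0 s t - D 1 1 s t / D 0 0 s t * qa s t - qas s t * qb s t - qa s t * qat s t.
Definition qatt s t := D 1 2 s t / D 0 0 s t - D 1 1 s t / D 0 0 s t * qb s t - qat s t * qb s t - qa s t * qbt s t.
Definition qbtt s t := D 0 3 s t / D 0 0 s t - D 0 2 s t / D 0 0 s t * qb s t - 2 * qb s t * qbt s t.

Definition QQ s t := s^3 * qa s t ^2 + qb s t ^2.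
Definition QQs s t := 3*s^2*qa s t^2 + 2*s^3*qa s t*qas s t + 2*qb s t*qat s t.
Definition QQt s t := 2*s^3*qa s t*qat s t + 2*qb s t*qbt s t.
Definition QQss s t := 6*s*qa s t^2 + 12*s^2*qa s t*qas s t + 2*s^3*(qas s t^2 + qa s t*qass s t) + 2*(qat s t^2 + qb s t*qast s t).
Definition QQtt s t := 2*s^3*(qat s t^2 + qa s t*qatt s t) + 2*(qbt s t^2 + qb s t*qbtt s t).

Definition psi s := 1 - 4*((s - sg)/sg)^2.
Definition psi1 s := -8*(s - sg)/sg^2.
Definition psi2 := -8/sg^2.
Definition chi t := 1 - sg*(t - tau)^2.
Definition chi1 t := -2*sg*(t - tau).
Definition chi2 := -2*sg.

Definition phi s t := psi s ^2 * chi t ^2.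
Definition phis s t := 2*psi s*psi1 s*chi t^2.
Definition phiss s t := (2*psi1 s^2 + 2*psi s*psi2)*chi t^2.
Definition phit s t := psi s^2*(2*chi t*chi1 t).
Definition phitt s t := psi s^2*(2*chi1 t^2 + 2*chi t*chi2).

Definition GG s t := phi s t * QQ s t.
Definition GGs s t := phis s t * QQ s t + phi s t * QQs s t.
Definition GGss s t := phiss s t * QQ s t + 2*phis s t*QQs s t + phi s t*QQss s t.
Definition GGt s t := phit s t * QQ s t + phi s t * QQt s t.
Definition GGtt s t := phitt s t * QQ s t + 2*phit s t*QQt s t + phi s t*QQtt s t.

Hypothesis HD : forall i j s t, 0 < s ->
     derivable_pt_lim (fun s' => D i j s' t) s (D (S i) j s t) /\
     derivable_pt_lim (fun t' => D i j s t') t (D i (S j) s t) /\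
     continuous2_at (D i j) s t.
Hypothesis Hpos : forall s t, 0 < s -> 0 < D 0 0 s t.
Hypothesis Hsg : 0 < sg.

Lemma Ds_eq i j s t : 0 < s -> Derive (fun x => D i j x t) s = D (S i) j s t.
Proof. intro Hs. apply is_derive_unique. apply is_derive_Reals. apply HD; auto. Qed.
Lemma Dt_eq i j s t : 0 < s -> Derive (fun x => D i j s x) t = D i (S j) s t.
Proof. intro Hs. apply is_derive_unique. apply is_derive_Reals. apply HD; auto. Qed.
Lemma Ds_ex i j s t : 0 < s -> ex_derive (fun x => D i j x t) s.
Proof. intro Hs. exists (D (S i) j s t). apply is_derive_Reals. apply HD; auto. Qed.
Lemma Dt_ex i j s t : 0 < s -> ex_derive (fun x => D i j s x) t.
Proof. intro Hs. exists (D i (S j) s t). apply is_derive_Reals. apply HD; auto. Qed.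

Lemma L1 s t : 0 < s -> is_derive (fun y => GG y t) s (GGs s t).
Proof.
  intro Hs. assert (Hf := Hpos s t Hs).
  unfold GG, GGs, phi, phis, QQ, QQs, qa, qb, qas, qat, psi, psi1, chi.
  auto_derive.
  - repeat split; try apply Ds_ex; auto; lra.
  - rewrite !Ds_eq by auto. unfold qa, qb. field; lra.
Qed.


Ltac unf := unfold GG, GGs, GGss, GGt, GGtt, phi, phis, phiss, phit, phitt,
  QQ, QQs, QQt, QQss, QQtt, qass, qast, qatt, qbtt, qas, qat, qbt, qa, qb,
  psi, psi1, psi2, chi, chi1, chi2.

Lemma L2 s t : 0 < s -> is_derive (fun y => GGs y t) s (GGss s t).
Proof.
  intro Hs. assert (Hf := Hpos s t Hs).
  unf. auto_derive.
  - repeat split; try apply Ds_ex; auto; lra.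
  - rewrite !Ds_eq by auto. field; lra.
Qed.

Lemma L3 s t : 0 < s -> is_derive (fun y => GG s y) t (GGt s t).
Proof.
  intro Hs. assert (Hf := Hpos s t Hs).
  unf. auto_derive.
  - repeat split; try apply Dt_ex; auto; lra.
  - rewrite !Dt_eq by auto. field; lra.
Qed.

Lemma L4 s t : 0 < s -> is_derive (fun y => GGt s y) t (GGtt s t).
Proof.
  intro Hs. assert (Hf := Hpos s t Hs).
  unf. auto_derive.
  - repeat split; try apply Dt_ex; auto; lra.
  - rewrite !Dt_eq by auto. field; lra.
Qed.
End S.


Section G.
Variable D : nat -> nat -> R -> R -> R.
Hypothesis HD : forall i j s t, 0 < s ->
     derivable_pt_lim (fun s' => D i j s' t) s (D (S i) j s t) /\
     derivable_pt_lim (fun t' => D i j s t') t (D i (S j) s t) /\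
     continuous2_at (D i j) s t.
Hypothesis Hpos : forall s t, 0 < s -> 0 < D 0 0 s t.
Hypothesis Hpde : forall s t, 0 < s -> s ^ 3 * D 2 0 s t + D 0 2 s t = 0.

Ltac c2 Hs :=
 repeat match goal with
 | |- continuous2_at (fun x y => @?F x y + @?G x y) _ _ => apply (cont2_plus F G)
 | |- continuous2_at (fun x y => @?F x y - @?G x y) _ _ => apply (cont2_minus F G)
 | |- continuous2_at (fun x y => @?F x y * @?G x y) _ _ => apply (cont2_mult F G)
 | |- continuous2_at (fun x y => @?F x y / @?G x y) _ _ => apply (cont2_div F G)
 | |- continuous2_at (fun x y => @?F x y ^ ?n) _ _ => apply (cont2_pow F n)
 | |- continuous2_at (fun x y => x) _ _ => apply cont2_s
 | |- continuous2_at (fun x y => y) _ _ => apply cont2_t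
 | |- continuous2_at (fun x y => D ?i ?j x y) _ _ => apply (proj2 (proj2 (HD i j _ _ Hs)))
 | |- continuous2_at (fun x y => ?c) _ _ => apply cont2_const
 | |- D 0 0 _ _ <> 0 => apply Rgt_not_eq, Hpos, Hs
 | |- _ <> 0 => lra
 end.

Lemma GG_cont sg tau s t : 0 < sg -> 0 < s -> continuous2_at (GG D sg tau) s t.
Proof.
  intros Hsg Hs.
  unfold GG, phi, QQ, qa, qb, psi, chi.
  c2 Hs.
Qed.

Lemma P1 s t : 0 < s -> 3 * s^2 * D 2 0 s t + s^3 * D 3 0 s t + D 1 2 s t = 0.
Proof.
  intro Hs.
  assert (A : is_derive (fun y => y^3 * D 2 0 y t + D 0 2 y t) s (3 * s^2 * D 2 0 s t + s^3 * D 3 0 s t + D 1 2 s t)).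
  { auto_derive.
    - repeat split; apply Ds_ex; auto.
    - rewrite !Ds_eq by auto. ring. }
  assert (B : is_derive (fun y => y^3 * D 2 0 y t + D 0 2 y t) s 0).
  { apply is_derive_ext_loc with (fun _ => 0).
    - exists (mkposreal s Hs). intros y Hy. simpl in Hy.
      unfold ball in Hy; simpl in Hy; unfold AbsRing_ball, abs, minus, plus, opp in Hy; simpl in Hy.
      rewrite Hpde; auto. apply Rabs_def2 in Hy. lra.
    - auto_derive; auto. }
  apply is_derive_unique in A. apply is_derive_unique in B. congruence.
Qed.

Lemma P2 s t : 0 < s -> s^3 * D 2 1 s t + D 0 3 s t = 0.
Proof.
  intro Hs.
  assert (A : is_derive (fun y => s^3 * D 2 0 s y + D 0 2 s y) t (s^3 * D 2 1 s t + D 0 3 s t)).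
  { auto_derive.
    - repeat split; apply Dt_ex; auto.
    - rewrite !Dt_eq by auto. ring. }
  assert (B : is_derive (fun y => s^3 * D 2 0 s y + D 0 2 s y) t 0).
  { apply is_derive_ext with (fun _ => 0).
    - intro y. rewrite Hpde; auto.
    - auto_derive; auto. }
  apply is_derive_unique in A. apply is_derive_unique in B. congruence.
Qed.


Lemma E0 s t : 0 < s -> s^3*(qas D s t + qa D s t^2) + qbt D s t + qb D s t^2 = 0.
Proof.
  intro Hs. assert (Hf := Hpos s t Hs). assert (P := Hpde s t Hs).
  replace (s^3*(qas D s t + qa D s t^2) + qbt D s t + qb D s t^2)
    with ((s ^ 3 * D 2 0 s t + D 0 2 s t) / D 0 0 s t)
    by (unfold qas, qbt, qa, qb; field; lra).
  rewrite P. field; lra.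
Qed.

Lemma E1 s t : 0 < s -> 3*s^2*(qas D s t + qa D s t^2) + s^3*(qass D s t + 2*qa D s t*qas D s t)
   + qatt D s t + 2*qb D s t*qat D s t = 0.
Proof.
  intro Hs. assert (Hf := Hpos s t Hs). assert (P := Hpde s t Hs). assert (Q := P1 s t Hs).
  replace (3*s^2*(qas D s t + qa D s t^2) + s^3*(qass D s t + 2*qa D s t*qas D s t)
   + qatt D s t + 2*qb D s t*qat D s t)
    with ((3 * s^2 * D 2 0 s t + s^3 * D 3 0 s t + D 1 2 s t) / D 0 0 s t
          - (s ^ 3 * D 2 0 s t + D 0 2 s t) * D 1 0 s t / D 0 0 s t ^ 2)
    by (unfold qass, qatt, qas, qat, qbt, qa, qb; field; lra).
  rewrite P, Q. field; lra.
Qed.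

Lemma E2 s t : 0 < s -> s^3*(qast D s t + 2*qa D s t*qat D s t) + qbtt D s t + 2*qb D s t*qbt D s t = 0.
Proof.
  intro Hs. assert (Hf := Hpos s t Hs). assert (P := Hpde s t Hs). assert (Q := P2 s t Hs).
  replace (s^3*(qast D s t + 2*qa D s t*qat D s t) + qbtt D s t + 2*qb D s t*qbt D s t)
    with ((s^3 * D 2 1 s t + D 0 3 s t) / D 0 0 s t
          - (s ^ 3 * D 2 0 s t + D 0 2 s t) * D 0 1 s t / D 0 0 s t ^ 2)
    by (unfold qast, qbtt, qas, qat, qbt, qa, qb; field; lra).
  rewrite P, Q. field; lra.
Qed.

End G.


Lemma poly_bound A B ps ch w : 0<=A<=27/8 -> 0<=B<=1/4 -> 0<=ps<=1 -> 0<=ch<=1 -> 0<=w<=1 ->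
 1664*A*B*ch^2 + 104*ps^2*w + 16*A*ps*ch^2 + 4*ps^2*ch <= 1682.
Proof.
  intros HA HB Hp Hc Hw.
  assert (Hc2 : 0 <= ch^2 <= 1) by (split; nra).
  assert (Hp2 : 0 <= ps^2 <= 1) by (split; nra).
  assert (T1 : A*B*ch^2 <= 27/8*(1/4)*1).
  { apply Rmult_le_compat; [nra|lra| apply Rmult_le_compat; lra |lra]. }
  assert (T2 : ps^2*w <= 1*1) by (apply Rmult_le_compat; lra).
  assert (T3 : A*ps*ch^2 <= 27/8*1*1).
  { apply Rmult_le_compat; [nra|lra| apply Rmult_le_compat; lra |lra]. }
  assert (T4 : ps^2*ch <= 1*1) by (apply Rmult_le_compat; lra).
  lra.
Qed.

Section G2.
Variable D : nat -> nat -> R -> R -> R.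
Hypothesis HD : forall i j s t, 0 < s ->
     derivable_pt_lim (fun s' => D i j s' t) s (D (S i) j s t) /\
     derivable_pt_lim (fun t' => D i j s t') t (D i (S j) s t) /\
     continuous2_at (D i j) s t.
Hypothesis Hpos : forall s t, 0 < s -> 0 < D 0 0 s t.
Hypothesis Hpde : forall s t, 0 < s -> s ^ 3 * D 2 0 s t + D 0 2 s t = 0.

Lemma QQ_nonneg s t : 0 < s -> 0 <= QQ D s t.
Proof.
  intro Hs. unfold QQ. assert (0 <= s^3) by (apply pow_le; lra).
  assert (0 <= qa D s t ^2) by apply pow2_ge_0. assert (0 <= qb D s t ^2) by apply pow2_ge_0.
  nra.
Qed.

Lemma grad sg tau : 0 < sg -> QQ D sg tau <= 8410 * sg.
Proof.
  intros Hsg.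
  set (k := / sqrt sg).
  assert (Hsq : 0 < sqrt sg) by (apply sqrt_lt_R0; auto).
  assert (Hk : 0 < k) by (apply Rinv_0_lt_compat; auto).
  assert (Hk2 : sg * k^2 = 1).
  { unfold k. rewrite pow_inv. rewrite <- Rsqr_pow2, Rsqr_sqrt by lra. field; lra. }
  destruct (evt2 (GG D sg tau) (sg/2) (3*sg/2) (tau - k) (tau + k)) as [sm [tm [Hsm [Htm Hmax]]]];
    try lra.
  { intros; apply GG_cont; auto. }
  assert (Hc : GG D sg tau sg tau = QQ D sg tau).
  { unfold GG, phi, psi, chi. replace ((sg - sg)/sg) with 0 by (field; lra).
    replace (tau - tau) with 0 by ring. ring. }
  destruct (Rle_or_lt (QQ D sg tau) 0) as [HQ0|HQp]; [lra|].
  assert (HGm : QQ D sg tau <= GG D sg tau sm tm).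
  { rewrite <- Hc. apply Hmax; lra. }
  assert (Hsm0 : 0 < sm) by lra.
  assert (HGp : 0 < GG D sg tau sm tm) by lra.
  assert (Hpsi : psi sg sm <> 0).
  { intro Z. unfold GG, phi in HGp. rewrite Z in HGp. lra. }
  assert (Hchi : chi sg tau tm <> 0).
  { intro Z. unfold GG, phi in HGp. rewrite Z in HGp. lra. }
  assert (Hsm' : sg/2 < sm < 3*sg/2).
  { split; destruct Hsm as [H1 H2]; destruct H1 as [H1|H1]; auto; try (destruct H2 as [H2|H2]; auto);
      exfalso; apply Hpsi; unfold psi; try subst sm; try rewrite H2; field_simplify; try lra;
      try (field; lra). }
  assert (Htm' : tau - k < tm < tau + k).
  { destruct Htm as [H1 H2]. split.
    - destruct H1 as [H1|H1]; auto. exfalso. apply Hchi. unfold chi. rewrite <- H1.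
      replace ((tau - k - tau)^2) with (k^2) by ring. lra.
    - destruct H2 as [H2|H2]; auto. exfalso. apply Hchi. unfold chi. rewrite H2.
      replace ((tau + k - tau)^2) with (k^2) by ring. lra. }
  set (dels := Rmin (sm - sg/2) (3*sg/2 - sm)).
  assert (Hdels : 0 < dels) by (apply Rmin_glb_lt; lra).
  assert (Hdels1 : dels <= sm - sg/2) by apply Rmin_l.
  assert (Hdels2 : dels <= 3*sg/2 - sm) by apply Rmin_r.
  destruct (max_deriv2 (fun y => GG D sg tau y tm) (fun y => GGs D sg tau y tm) sm
              (GGss D sg tau sm tm) dels Hdels) as [M1 M3].
  { intros y Hy. apply Rabs_def2 in Hy. apply Hmax; lra. }
  { intros y Hy. apply Rabs_def2 in Hy. apply is_derive_Reals. apply L1; auto; lra. }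
  { apply is_derive_Reals. apply L2; auto. }
  set (delt := Rmin (tm - (tau - k)) (tau + k - tm)).
  assert (Hdelt : 0 < delt) by (apply Rmin_glb_lt; lra).
  assert (Hdelt1 : delt <= tm - (tau - k)) by apply Rmin_l.
  assert (Hdelt2 : delt <= tau + k - tm) by apply Rmin_r.
  destruct (max_deriv2 (fun y => GG D sg tau sm y) (fun y => GGt D sg tau sm y) tm
              (GGtt D sg tau sm tm) delt Hdelt) as [M2 M4].
  { intros y Hy. apply Rabs_def2 in Hy. apply Hmax; lra. }
  { intros y Hy. apply is_derive_Reals. apply L3; auto. }
  { apply is_derive_Reals. apply L4; auto. }
  simpl in M1, M2, M3, M4.
  assert (Hphi0 : 0 <= phi sg tau sm tm).
  { unfold phi. apply Rmult_le_pos; apply pow2_ge_0. }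
  assert (HQ0 := QQ_nonneg sm tm Hsm0).
  assert (Hphi : 0 < phi sg tau sm tm).
  { destruct Hphi0 as [H|H]; auto. unfold GG in HGp. rewrite <- H in HGp. lra. }
  assert (HQ : 0 < QQ D sm tm).
  { destruct HQ0 as [H|H]; auto. unfold GG in HGp. rewrite <- H in HGp. lra. }
  assert (AC := alg_core sm (qa D sm tm) (qb D sm tm) (qas D sm tm) (qat D sm tm) (qbt D sm tm)
     (qass D sm tm) (qast D sm tm) (qatt D sm tm) (qbtt D sm tm)
     (phi sg tau sm tm) (phis sg tau sm tm) (phit sg tau sm tm) (phiss sg tau sm tm) (phitt sg tau sm tm)
     Hsm0 Hphi HQ (E0 D Hpos Hpde sm tm Hsm0) (E1 D HD Hpos Hpde sm tm Hsm0) (E2 D HD Hpos Hpde sm tm Hsm0)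
     M1 M2 M3 M4).
  cbv zeta in AC. change (sm ^ 3 * qa D sm tm ^ 2 + qb D sm tm ^ 2) with (QQ D sm tm) in AC.
  set (u := (sm - sg)/sg).
  set (w := sg * (tm - tau)^2).
  assert (Id : 7 * (sm ^ 3 * phis sg tau sm tm ^ 2 + phit sg tau sm tm ^ 2) -
       phi sg tau sm tm * (sm ^ 3 * phiss sg tau sm tm + phitt sg tau sm tm)
     = phi sg tau sm tm * (sg * (1664*((1+u)^3)*(u^2)*(chi sg tau tm)^2 + 104*(psi sg sm)^2*w
         + 16*((1+u)^3)*(psi sg sm)*(chi sg tau tm)^2 + 4*(psi sg sm)^2*(chi sg tau tm)))).
  { unfold u, w, phi, phis, phit, phiss, phitt, psi, psi1, psi2, chi, chi1, chi2. field. lra. }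
  assert (Hu : -1/2 <= u <= 1/2).
  { assert (E : u * sg = sm - sg) by (unfold u; field; lra). split; nra. }
  assert (Hw : 0 <= w <= 1).
  { unfold w. split; [apply Rmult_le_pos; [lra| apply pow2_ge_0]|].
    rewrite <- Hk2. apply Rmult_le_compat_l; [lra|].
    assert (Hab : Rabs (tm - tau) <= k) by (apply Rabs_le; lra).
    rewrite <- (Rabs_pos_eq k) in Hab by lra. rewrite <- !Rsqr_pow2. apply Rsqr_le_abs_1; auto. }
  assert (Hpsi_eq : psi sg sm = 1 - 4*u^2) by (unfold psi, u; ring).
  assert (Hchi_eq : chi sg tau tm = 1 - w) by (unfold chi, w; ring).
  assert (PB := poly_bound ((1+u)^3) (u^2) (psi sg sm) (chi sg tau tm) w).
  rewrite Hpsi_eq, Hchi_eq in PB. rewrite Hchi_eq, Hpsi_eq in Id.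
  assert (PB' : 1664 * (1 + u) ^ 3 * u ^ 2 * (1 - w) ^ 2 + 104 * (1 - 4 * u ^ 2) ^ 2 * w +
      16 * (1 + u) ^ 3 * (1 - 4 * u ^ 2) * (1 - w) ^ 2 + 4 * (1 - 4 * u ^ 2) ^ 2 * (1 - w) <= 1682).
  { apply PB; try lra.
    - split; [apply pow_le; lra|].
      replace (27/8) with ((3/2)^3) by field. apply pow_incr. lra.
    - split; [apply pow2_ge_0| nra].
    - split; nra. }
  rewrite Id in AC.
  assert (X : (1/5) * phi sg tau sm tm * QQ D sm tm <= sg * 1682).
  { apply Rmult_le_reg_l with (phi sg tau sm tm); auto.
    apply Rle_trans with (phi sg tau sm tm * (sg * (1664 * (1 + u) ^ 3 * u ^ 2 * (1 - w) ^ 2 + 104 * (1 - 4 * u ^ 2) ^ 2 * w +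
      16 * (1 + u) ^ 3 * (1 - 4 * u ^ 2) * (1 - w) ^ 2 + 4 * (1 - 4 * u ^ 2) ^ 2 * (1 - w)))).
    - replace (phi sg tau sm tm * (1 / 5 * phi sg tau sm tm * QQ D sm tm))
        with (1 / 5 * phi sg tau sm tm ^ 2 * QQ D sm tm) by ring. exact AC.
    - apply Rmult_le_compat_l; [lra|]. apply Rmult_le_compat_l; lra. }
  unfold GG in HGm. lra.
Qed.
End G2.


Section F.
Variable D : nat -> nat -> R -> R -> R.
Hypothesis HD : forall i j s t, 0 < s ->
     derivable_pt_lim (fun s' => D i j s' t) s (D (S i) j s t) /\
     derivable_pt_lim (fun t' => D i j s t') t (D i (S j) s t) /\
     continuous2_at (D i j) s t.
Hypothesis Hpos : forall s t, 0 < s -> 0 < D 0 0 s t.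
Hypothesis Hpde : forall s t, 0 < s -> s ^ 3 * D 2 0 s t + D 0 2 s t = 0.

Lemma qa_bound s t : 0 < s -> Rabs (qa D s t) <= 92 / s.
Proof.
  intro Hs. assert (G := grad D HD Hpos Hpde s t Hs). unfold QQ in G.
  assert (H1 : s^3 * qa D s t ^ 2 <= 8410 * s) by (pose proof (pow2_ge_0 (qb D s t)); lra).
  assert (H2 : qa D s t ^ 2 <= (92/s)^2).
  { apply Rmult_le_reg_l with (s^3); [apply pow_lt; lra|].
    replace (s^3 * (92/s)^2) with (8464 * s) by (field; lra). lra. }
  rewrite <- (Rabs_pos_eq (92/s)) by (apply Rlt_le, Rdiv_lt_0_compat; lra).
  apply Rsqr_le_abs_0. rewrite !Rsqr_pow2. exact H2.
Qed.

Lemma qb_bound s t : 0 < s -> Rabs (qb D s t) <= 92 * sqrt s.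
Proof.
  intro Hs. assert (G := grad D HD Hpos Hpde s t Hs). unfold QQ in G.
  assert (H1 : qb D s t ^ 2 <= 8410 * s).
  { assert (0 <= s^3 * qa D s t ^ 2) by (apply Rmult_le_pos; [apply pow_le; lra| apply pow2_ge_0]). lra. }
  assert (H2 : qb D s t ^ 2 <= (92 * sqrt s)^2).
  { rewrite Rpow_mult_distr. rewrite <- Rsqr_pow2 with (x := sqrt s). rewrite Rsqr_sqrt by lra. lra. }
  rewrite <- (Rabs_pos_eq (92 * sqrt s)) by (apply Rmult_le_pos; [lra| apply sqrt_pos]).
  apply Rsqr_le_abs_0. rewrite !Rsqr_pow2. exact H2.
Qed.

Lemma der_lnS (c s t : R) : 0 < s ->
  derivable_pt_lim (fun y => ln (D 0 0 y t) + c * ln y) s (qa D s t + c / s).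
Proof.
  intro Hs. apply is_derive_Reals. assert (Hf := Hpos s t Hs).
  auto_derive.
  - repeat split; try apply Ds_ex; auto; lra.
  - rewrite Ds_eq by auto. unfold qa. field; lra.
Qed.

Lemma der_lnT (s t : R) : 0 < s ->
  derivable_pt_lim (fun y => ln (D 0 0 s y)) t (qb D s t).
Proof.
  intro Hs. apply is_derive_Reals. assert (Hf := Hpos s t Hs).
  auto_derive.
  - repeat split; try apply Dt_ex; auto; lra.
  - rewrite Dt_eq by auto. unfold qb. field; lra.
Qed.

Lemma mono_s s1 s0 t : 0 < s1 <= s0 ->
  ln (D 0 0 s1 t) + 92 * ln s1 <= ln (D 0 0 s0 t) + 92 * ln s0 /\
  ln (D 0 0 s0 t) + (-92) * ln s0 <= ln (D 0 0 s1 t) + (-92) * ln s1.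
Proof.
  intros [H1 H2]. destruct H2 as [H2|H2]; [|subst; lra].
  split.
  - destruct (MVT_cor2 (fun y => ln (D 0 0 y t) + 92 * ln y) (fun y => qa D y t + 92 / y) s1 s0 H2)
      as [c [Hc1 Hc2]].
    + intros c Hc. apply der_lnS. lra.
    + assert (B := qa_bound c t ltac:(lra)). idtac.
      assert (- (92/c) <= qa D c t) by (pose proof (Rle_abs (- qa D c t)); rewrite Rabs_Ropp in *; lra).
      assert (0 <= (qa D c t + 92 / c) * (s0 - s1)) by (apply Rmult_le_pos; lra).
      lra.
  - destruct (MVT_cor2 (fun y => ln (D 0 0 y t) + (-92) * ln y) (fun y => qa D y t + (-92) / y) s1 s0 H2)
      as [c [Hc1 Hc2]].
    + intros c Hc. apply der_lnS. lra.
    + assert (B := qa_bound c t ltac:(lra)).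
      assert (qa D c t <= 92/c) by (pose proof (Rle_abs (qa D c t)); lra).
      assert ((qa D c t + (-92) / c) * (s0 - s1) <= 0).
      { apply Rmult_le_0_r_compat || (replace ((-92)/c) with (-(92/c)) by (field; lra);
        rewrite <- (Rmult_0_l (s0 - s1)); apply Rmult_le_compat_r; lra). }
      lra.
Qed.

Lemma lip_t s t t' : 0 < s -> Rabs (ln (D 0 0 s t) - ln (D 0 0 s t')) <= 92 * sqrt s * Rabs (t - t').
Proof.
  intro Hs.
  destruct (Rtotal_order t t') as [Hl|[He|Hl]].
  - destruct (MVT_cor2 (fun y => ln (D 0 0 s y)) (fun y => qb D s y) t t' Hl) as [c [Hc1 Hc2]].
    + intros c Hc. apply der_lnT; auto.
    + rewrite <- Rabs_Ropp. replace (- (ln (D 0 0 s t) - ln (D 0 0 s t'))) with (ln (D 0 0 s t') - ln (D 0 0 s t)) by ring.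
      rewrite Hc1, Rabs_mult. rewrite <- (Rabs_Ropp (t - t')). replace (- (t - t')) with (t' - t) by ring.
      apply Rmult_le_compat_r; [apply Rabs_pos| apply qb_bound; auto].
  - subst. rewrite !Rminus_diag, Rabs_R0. lra.
  - destruct (MVT_cor2 (fun y => ln (D 0 0 s y)) (fun y => qb D s y) t' t Hl) as [c [Hc1 Hc2]].
    + intros c Hc. apply der_lnT; auto.
    + rewrite Hc1, Rabs_mult.
      apply Rmult_le_compat_r; [apply Rabs_pos| apply qb_bound; auto].
Qed.


Lemma harn s0 t0 t dd : 0 < s0 -> 0 < dd -> Rabs (t - t0) <= dd ->
  ln (D 0 0 s0 t) >= ln (D 0 0 s0 t0) - 92 - 184 * ln (1 + s0 * dd^2).
Proof.
  intros Hs0 Hdd Ht.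
  set (X := s0 * dd^2).
  assert (HX : 0 < X) by (unfold X; apply Rmult_lt_0_compat; [lra| apply pow_lt; lra]).
  set (s1 := s0 / (1 + X)).
  assert (Hs1 : 0 < s1) by (unfold s1; apply Rdiv_lt_0_compat; lra).
  assert (Hs10 : s1 <= s0).
  { unfold s1. apply Rmult_le_reg_r with (1 + X); [lra|].
    unfold Rdiv. rewrite Rmult_assoc, Rinv_l by lra. nra. }
  destruct (mono_s s1 s0 t ltac:(lra)) as [A1 _].
  destruct (mono_s s1 s0 t0 ltac:(lra)) as [_ A2].
  assert (A3 := lip_t s1 t t0 Hs1).
  assert (Hln : ln s1 = ln s0 - ln (1 + X)) by (unfold s1; rewrite ln_div; lra).
  assert (Hsq : sqrt s1 * Rabs (t - t0) <= 1).
  { assert (Z1 : 0 <= sqrt s1 * Rabs (t - t0)) by (apply Rmult_le_pos; [apply sqrt_pos| apply Rabs_pos]).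
    assert (Z2 : (sqrt s1 * Rabs (t - t0))^2 <= 1).
    { rewrite Rpow_mult_distr. rewrite <- Rsqr_pow2 with (x := sqrt s1). rewrite Rsqr_sqrt by lra.
      apply Rle_trans with (s1 * dd^2).
      - apply Rmult_le_compat_l; [lra|].
        assert (0 <= Rabs (t - t0)) by apply Rabs_pos.
        apply pow_incr; lra.
      - unfold s1. apply Rmult_le_reg_r with (1 + X); [lra|].
        replace (s0 / (1 + X) * dd ^ 2 * (1 + X)) with (s0 * dd^2) by (field; lra). unfold X; lra. }
    nra. }
  assert (A4 : ln (D 0 0 s1 t) >= ln (D 0 0 s1 t0) - 92).
  { assert (92 * sqrt s1 * Rabs (t - t0) <= 92) by nra.
    pose proof (Rle_abs (ln (D 0 0 s1 t0) - ln (D 0 0 s1 t))).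
    rewrite Rabs_minus_sym in A3. lra. }
  fold X. lra.
Qed.

End F.

Definition Deps (D : nat -> nat -> R -> R -> R) (e : R) (i j : nat) : R -> R -> R :=
  match i, j with O, O => fun s t => D O O s t + e | _, _ => D i j end.

Lemma Deps_HD (D : nat -> nat -> R -> R -> R) (e : R) : (forall i j s t, 0 < s ->
     derivable_pt_lim (fun s' => D i j s' t) s (D (S i) j s t) /\
     derivable_pt_lim (fun t' => D i j s t') t (D i (S j) s t) /\
     continuous2_at (D i j) s t) ->
  forall i j s t, 0 < s ->
     derivable_pt_lim (fun s' => Deps D e i j s' t) s (Deps D e (S i) j s t) /\
     derivable_pt_lim (fun t' => Deps D e i j s t') t (Deps D e i (S j) s t) /\
     continuous2_at (Deps D e i j) s t.
Proof.
  intros HD i j s t Hs.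
  destruct i as [|i]; destruct j as [|j]; simpl; try apply HD; auto.
  destruct (HD 0%nat 0%nat s t Hs) as [A [B C]].
  split; [|split].
  - replace (D 1%nat 0%nat s t) with (D 1%nat 0%nat s t + 0) by ring.
    apply (derivable_pt_lim_plus (fun s' => D 0%nat 0%nat s' t) (fun _ => e)); [exact A| apply derivable_pt_lim_const].
  - replace (D 0%nat 1%nat s t) with (D 0%nat 1%nat s t + 0) by ring.
    apply (derivable_pt_lim_plus (fun t' => D 0%nat 0%nat s t') (fun _ => e)); [exact B| apply derivable_pt_lim_const].
  - apply (cont2_plus (D 0%nat 0%nat) (fun _ _ => e)); auto. apply cont2_const.
Qed.

Lemma ln2_half : 1/2 < ln 2.
Proof.
  assert (H1 : exp (1/2) * exp (1/2) = exp 1) by (rewrite <- exp_plus; f_equal; field).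
  assert (H2 := exp_le_3). assert (H3 : 0 < exp (1/2)) by apply exp_pos.
  assert (H4 : exp (1/2) < 2) by nra.
  rewrite <- (ln_exp (1/2)). apply ln_increasing; auto.
Qed.

Theorem proposition4p5 :
  exists c : R, 1 <= c /\
  forall (f : R -> R -> R) (D : nat -> nat -> R -> R -> R),
    smooth_on_half_plane f D ->
    (forall s t, 0 < s -> 0 <= f s t) ->
    (forall s t, 0 < s -> s ^ 3 * D 2%nat 0%nat s t + D 0%nat 2%nat s t = 0) ->
    forall s0 t0 M : R, 0 < s0 -> M <> t0 ->
    forall t : R, Rmin M t0 <= t <= Rmax M t0 ->
      f s0 t >= f s0 t0 / Rpower (2 + s0 * (t0 - M) ^ 2) c
                 * ((t - M) ^ 2 / (t0 - M) ^ 2).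
Proof.
  exists 400. split; [lra|].
  intros f D [Hf HD0] Hnn Hpde s0 t0 M Hs0 HM t Ht.
  assert (HD : forall i j s t, 0 < s ->
     derivable_pt_lim (fun s' => D i j s' t) s (D (S i) j s t) /\
     derivable_pt_lim (fun t' => D i j s t') t (D i (S j) s t) /\
     continuous2_at (D i j) s t) by (intros; apply HD0; auto).
  set (dd := Rabs (t0 - M)).
  assert (Hdd : 0 < dd) by (apply Rabs_pos_lt; lra).
  assert (Hdd2 : dd^2 = (t0 - M)^2) by (unfold dd; rewrite <- !Rsqr_pow2; apply Rsqr_abs_eq || (rewrite <- Rsqr_abs; reflexivity)).
  assert (Htt : Rabs (t - t0) <= dd).
  { unfold dd. revert Ht. unfold Rmin, Rmax. destruct (Rle_dec M t0); intro Ht;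
      unfold Rabs; repeat destruct Rcase_abs; lra. }
  set (X := s0 * (t0 - M)^2).
  assert (HX : 0 <= X) by (unfold X; apply Rmult_le_pos; [lra| apply pow2_ge_0]).
  set (kap := exp (-92 - 184 * ln (1 + X))).
  assert (Hkey : forall e, 0 < e -> f s0 t + e >= (f s0 t0 + e) * kap).
  { intros e He.
    assert (Hpos' : forall s t, 0 < s -> 0 < Deps D e 0 0 s t).
    { intros s t' Hs. simpl. rewrite Hf by exact Hs. pose proof (Hnn s t' Hs); lra. }
    assert (H := harn (Deps D e) (Deps_HD D e HD) Hpos' Hpde s0 t0 t dd Hs0 Hdd Htt).
    unfold Deps in H; cbv beta iota in H. rewrite !Hf in H by exact Hs0. rewrite Hdd2 in H. fold X in H.
    assert (P1 : 0 < f s0 t + e) by (pose proof (Hnn s0 t Hs0); lra).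
    assert (P2 : 0 < f s0 t0 + e) by (pose proof (Hnn s0 t0 Hs0); lra).
    rewrite <- (exp_ln (f s0 t + e)) by exact P1.
    rewrite <- (exp_ln (f s0 t0 + e)) by exact P2.
    unfold kap. rewrite <- exp_plus. apply Rle_ge.
    destruct (Rle_lt_or_eq_dec _ _ (Rge_le _ _ H)) as [Hl|Hl].
    - left. apply exp_increasing. lra.
    - right. f_equal. lra. }
  assert (Hkap : f s0 t >= f s0 t0 * kap).
  { destruct (Rge_or_gt (f s0 t) (f s0 t0 * kap)) as [H|H]; auto.
    exfalso. set (e := (f s0 t0 * kap - f s0 t) / 2).
    assert (He : 0 < e) by (unfold e; lra).
    assert (Hk := Hkey e He).
    assert (0 < kap) by apply exp_pos.
    assert (e * kap >= 0) by nra.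
    unfold e in *. lra. }
  assert (Hr : (t - M)^2 / (t0 - M)^2 <= 1).
  { rewrite <- Hdd2. apply Rmult_le_reg_r with (dd^2); [apply pow_lt; lra|].
    unfold Rdiv. rewrite Rmult_assoc, Rinv_l by (apply pow_nonzero; lra). rewrite Rmult_1_r, Rmult_1_l.
    rewrite <- !Rsqr_pow2. apply Rsqr_le_abs_1. unfold dd. rewrite Rabs_Rabsolu.
    revert Ht. unfold Rmin, Rmax. destruct (Rle_dec M t0); intro Ht;
      unfold Rabs; repeat destruct Rcase_abs; lra. }
  assert (Hr0 : 0 <= (t - M)^2 / (t0 - M)^2).
  { apply Rmult_le_pos; [apply pow2_ge_0| left; apply Rinv_0_lt_compat; rewrite <- Hdd2; apply pow_lt; lra]. }
  assert (HRp : / Rpower (2 + X) 400 <= kap).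
  { unfold Rpower, kap. rewrite <- exp_Ropp. apply exp_le_inv || idtac.
    destruct (Rle_lt_or_eq_dec (- (400 * ln (2 + X))) (-92 - 184 * ln (1 + X))) as [Hl|Hl].
    - assert (L1 : ln (1 + X) <= ln (2 + X)) by (apply ln_le; lra).
      assert (L2 : ln 2 <= ln (2 + X)) by (apply ln_le; lra).
      assert (L3 := ln2_half).
      assert (L4 : 0 <= ln (1 + X)) by (rewrite <- ln_1; apply ln_le; lra).
      lra.
    - left. apply exp_increasing. exact Hl.
    - right. f_equal. exact Hl. }
  assert (Hf0 := Hnn s0 t0 Hs0).
  fold X. unfold Rdiv at 1.
  apply Rle_ge. apply Rle_trans with (f s0 t0 * kap); [|apply Rge_le; exact Hkap].
  rewrite Rmult_assoc. apply Rmult_le_compat_l; auto.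
  assert (0 < / Rpower (2 + X) 400) by (apply Rinv_0_lt_compat; unfold Rpower; apply exp_pos).
  nra.
Qed.
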